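(* Let $V_i\sim\mathcal M[\underline\sigma_i,\overline\sigma_i]$ with $\underline\sigma_i\le\overline\sigma_i$, $i=1,\dots,d$. The following are equivalent: (1) $V_1\dashrightarrow V_2\dashrightarrow\cdots\dashrightarrow V_d$; (2) $V_{i_1}\dashrightarrow V_{i_2}\dashrightarrow\cdots\dashrightarrow V_{i_d}$ for every permutation $(i_1,\dots,i_d)$ of $(1,\dots,d)$; (3) $(V_1,\dots,V_d)\sim\mathcal M\big(\prod_{i=1}^d[\underline\sigma_i,\overline\sigma_i]\big)$.
   Context: Sublinear expectation space $(\Omega,\mathcal H,\hat{\mathbb E})$, $\hat{\mathbb E}[X]=\sup_{Q\in\mathcal P}E_Q[X]$. $C_{b,Lip}$: bounded Lipschitz functions; $C_{l.Lip}(\mathbb R^d)$: $|\varphi(x)-\varphi(y)|\le C(1+|x|^k+|y|^k)|x-y|$. $X\dashrightarrow Y$ means $\hat{\mathbb E}[\varphi(X,Y)]=\hat{\mathbb E}[\hat{\mathbb E}[\varphi(x,Y)]_{x=X}]$ for all $\varphi\in C_{b,Lip}$; $X_1\dashrightarrow\cdots\dashrightarrow X_n$ means $(X_1,\dots,X_i)\dashrightarrow X_{i+1}$ for each $i$. For a compact convex $\Theta\subset\mathbb R^d$, a random vector $\mathbf V\sim\mathcal M(\Theta)$ (maximal distribution) if $\hat{\mathbb E}[\varphi(\mathbf V)]=\max_{\theta\in\Theta}\varphi(\theta)$ for all $\varphi\in C_{l.Lip}(\mathbb R^d)$; $\mathcal M[a,b]$ is the case $d=1$, $\Theta=[a,b]$.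 *)

(* Defs.v *)
From HB Require Import structures.
From mathcomp Require Import all_boot all_order all_algebra all_fingroup.
From mathcomp Require Import reals.
Set Implicit Arguments. Unset Strict Implicit. Unset Printing Implicit Defensive.
Import Order.TTheory GRing.Theory Num.Theory.
Local Open Scope ring_scope.

(* Points of R^n are functions 'I_n -> R; we use the l^1 norm
   (all norms on R^n are equivalent, so the Lipschitz classes do not depend on it). *)
Definition normn (R : realType) (n : nat) (x : 'I_n -> R) : R :=
  \sum_(i < n) `|x i|.

Definition subv (R : realType) (n : nat) (x y : 'I_n -> R) : 'I_n -> R :=
  fun i => x i - y i.

Definition lLip (R : realType) (n : nat) (phi : ('I_n -> R) -> R) : Prop :=
  exists (C : R) (k : nat), 0 <= C /\
    forall x y, `|phi x - phi y| <=
      C * (1 + normn x ^+ k + normn y ^+ k) * normn (subv x y).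

Definition bLip (R : realType) (n : nat) (phi : ('I_n -> R) -> R) : Prop :=
  (exists M : R, forall x, `|phi x| <= M) /\
  (exists L : R, forall x y, `|phi x - phi y| <= L * normn (subv x y)).

Record sublinear_expectation (R : realType) (Omega : Type) := SubExp {
  H : (Omega -> R) -> Prop;
  E : (Omega -> R) -> R;
  H_cst : forall c : R, H (fun _ => c);
  H_lLip : forall (n : nat) (X : 'I_n -> Omega -> R) (phi : ('I_n -> R) -> R),
      (forall i, H (X i)) -> lLip phi -> H (fun w => phi (fun i => X i w));
  E_mono : forall X Y, H X -> H Y -> (forall w, X w <= Y w) -> E X <= E Y;
  E_cst : forall c : R, E (fun _ => c) = c;
  E_subadd : forall X Y, H X -> H Y -> E (fun w => X w + Y w) <= E X + E Y;
  E_poshom : forall (l : R) X, 0 <= l -> H X -> E (fun w => l * X w) = l * E X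
}.

Definition joinv (R : realType) (m n : nat) (x : 'I_m -> R) (y : 'I_n -> R)
  : 'I_(m + n) -> R :=
  fun k => match split k with inl i => x i | inr j => y j end.

Definition indep (R : realType) (Omega : Type) (S : sublinear_expectation R Omega)
  (m n : nat) (X : 'I_m -> Omega -> R) (Y : 'I_n -> Omega -> R) : Prop :=
  forall phi : ('I_(m + n) -> R) -> R, bLip phi ->
    E S (fun w => phi (joinv (fun i => X i w) (fun j => Y j w))) =
    E S (fun w => E S (fun w' => phi (joinv (fun i => X i w) (fun j => Y j w')))).

Definition seq_indep (R : realType) (Omega : Type) (S : sublinear_expectation R Omega)
  (d : nat) (V : 'I_d -> Omega -> R) : Prop :=
  forall (k : nat) (hk : (k < d)%N), (0 < k)%N ->
    indep S (fun i : 'I_k => V (widen_ord (ltnW hk) i))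
            (fun _ : 'I_1 => V (Ordinal hk)).

Definition maxdist (R : realType) (Omega : Type) (S : sublinear_expectation R Omega)
  (d : nat) (V : 'I_d -> Omega -> R) (Theta : ('I_d -> R) -> Prop) : Prop :=
  forall phi : ('I_d -> R) -> R, lLip phi ->
    (exists theta, Theta theta /\ E S (fun w => phi (fun i => V i w)) = phi theta) /\
    (forall theta, Theta theta -> phi theta <= E S (fun w => phi (fun i => V i w))).

Definition box (R : realType) (d : nat) (lo hi : 'I_d -> R) : ('I_d -> R) -> Prop :=
  fun theta => forall i, lo i <= theta i <= hi i.

(* Main.v *)
Require Import Defs.
From HB Require Import structures.
From mathcomp Require Import all_boot all_order all_algebra all_fingroup.
From mathcomp Require Import reals.
From mathcomp Require Import ring lra.
From Stdlib Require Import FunctionalExtensionality.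
Import Order.TTheory GRing.Theory Num.Theory.
Set Implicit Arguments. Unset Strict Implicit. Unset Printing Implicit Defensive.
Local Open Scope ring_scope.

Lemma normn_ge0 (R : realType) n (x : 'I_n -> R) : 0 <= normn x.
Proof. by apply: sumr_ge0 => i _; exact: normr_ge0. Qed.

Lemma normn1 (R : realType) (x : 'I_1 -> R) : normn x = `|x ord0|.
Proof. by rewrite /normn big_ord1. Qed.

Lemma normn2 (R : realType) (x : 'I_2 -> R) : normn x = `|x ord0| + `|x ord_max|.
Proof.
rewrite /normn big_ord_recr big_ord1 /=.
by have -> : widen_ord (leqnSn 1) ord0 = ord0 :> 'I_2 by apply: val_inj.
Qed.

Lemma lip_lLip (R : realType) n (phi : ('I_n -> R) -> R) L :
  (forall x y, `|phi x - phi y| <= L * normn (subv x y)) -> lLip phi.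
Proof.
move=> h; exists `|L|, 0%N; split; first exact: normr_ge0.
move=> x y; rewrite !expr0; apply: le_trans (h x y) _.
apply: ler_wpM2r; first exact: normn_ge0.
have := normr_ge0 L; have := ler_norm L; lra.
Qed.

Lemma sum_inj_le (R : realType) m n (f : 'I_m -> 'I_n) (G : 'I_n -> R) :
  injective f -> (forall j, 0 <= G j) ->
  \sum_(i < m) G (f i) <= \sum_(j < n) G j.
Proof.
move=> fi G0.
rewrite (bigID (mem (f @: setT))) /=.
have -> : \sum_(i < n | true && (i \in f @: setT)) G i = \sum_(i in f @: setT) G i.
  by apply: eq_bigl => i.
rewrite big_imset /=; last by move=> x y _ _; apply: fi.
have -> : \sum_(i in [set: 'I_m]) G (f i) = \sum_(i < m) G (f i).
  by apply: eq_bigl => i; rewrite inE.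
rewrite lerDl; apply: sumr_ge0 => i _; exact: G0.
Qed.

Lemma lLip_inj (R : realType) m n (f : 'I_m -> 'I_n) (phi : ('I_m -> R) -> R) :
  injective f -> lLip phi -> lLip (fun v : 'I_n -> R => phi (fun i => v (f i))).
Proof.
move=> fi [C [k [C0 h]]]; exists C, k; split => // x y.
apply: le_trans (h _ _) _.
have nle : forall z : 'I_n -> R, normn (fun i => z (f i)) <= normn z.
  by move=> z; apply: sum_inj_le => // j; exact: normr_ge0.
have p0 := normn_ge0 x; have q0 := normn_ge0 y.
have p1 := nle x; have q1 := nle y.
have e0 := normn_ge0 (fun i => x (f i)); have e1 := normn_ge0 (fun i => y (f i)).
apply: ler_pM.
- apply: mulr_ge0 => //; apply: addr_ge0; first apply: addr_ge0 => //.
  + by apply: exprn_ge0.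
  + by apply: exprn_ge0.
- exact: normn_ge0.
- apply: ler_wpM2l => //; apply: lerD; first apply: lerD => //.
  + by apply: lerXn2r; rewrite ?inE.
  + by apply: lerXn2r; rewrite ?inE.
- exact: (nle (subv x y)).
Qed.


Lemma E_ext (R : realType) Omega (S : sublinear_expectation R Omega) (X Y : Omega -> R) :
  (forall w, X w = Y w) -> E S X = E S Y.
Proof. by move=> h; rewrite (functional_extensionality X Y h). Qed.

Lemma H_ext (R : realType) Omega (S : sublinear_expectation R Omega) (X Y : Omega -> R) :
  (forall w, X w = Y w) -> H S X -> H S Y.
Proof. by move=> h; rewrite (functional_extensionality X Y h). Qed.

Lemma H_un (R : realType) Omega (S : sublinear_expectation R Omega) (f : R -> R) L X :
  (forall a b, `|f a - f b| <= L * `|a - b|) -> H S X -> H S (fun w => f (X w)).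
Proof.
move=> hf hX.
have := @H_lLip _ _ S 1 (fun _ => X) (fun x => f (x ord0)) (fun _ => hX).
apply; apply: (@lip_lLip _ _ _ L) => x y; rewrite normn1; exact: hf.
Qed.

Lemma H_bin (R : realType) Omega (S : sublinear_expectation R Omega) (f : R -> R -> R) C X Y :
  0 <= C ->
  (forall a b a' b', `|f a b - f a' b'| <=
       C * (1 + (`|a| + `|b|) + (`|a'| + `|b'|)) * (`|a - a'| + `|b - b'|)) ->
  H S X -> H S Y -> H S (fun w => f (X w) (Y w)).
Proof.
move=> C0 hf hX hY.
have := @H_lLip _ _ S 2 (fun i : 'I_2 => if val i == 0%N then X else Y)
   (fun x => f (x ord0) (x ord_max)).
apply; first by case=> [[|i] Hi].
exists C, 1%N; split => // x y; rewrite !expr1 !normn2; exact: hf.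
Qed.

Lemma H_add (R : realType) Omega (S : sublinear_expectation R Omega) X Y :
  H S X -> H S Y -> H S (fun w => X w + Y w).
Proof.
apply: (@H_bin _ _ S (fun a b => a + b) 1) => // a b a' b'.
have -> : a + b - (a' + b') = (a - a') + (b - b') by ring.
apply: le_trans (ler_normD _ _) _.
have := normr_ge0 a; have := normr_ge0 b; have := normr_ge0 a'; have := normr_ge0 b'.
have := normr_ge0 (a - a'); have := normr_ge0 (b - b'). nra.
Qed.

Lemma H_sub (R : realType) Omega (S : sublinear_expectation R Omega) X Y :
  H S X -> H S Y -> H S (fun w => X w - Y w).
Proof.
apply: (@H_bin _ _ S (fun a b => a - b) 1) => // a b a' b'.
have -> : a - b - (a' - b') = (a - a') - (b - b') by ring.
apply: le_trans (ler_normB _ _) _.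
have := normr_ge0 a; have := normr_ge0 b; have := normr_ge0 a'; have := normr_ge0 b'.
have := normr_ge0 (a - a'); have := normr_ge0 (b - b'). nra.
Qed.

Lemma H_absub (R : realType) Omega (S : sublinear_expectation R Omega) X Y :
  H S X -> H S Y -> H S (fun w => `|X w - Y w|).
Proof.
move=> hX hY; apply: (@H_un _ _ S (fun a => `|a|) 1) (H_sub hX hY) => a b.
by rewrite mul1r; exact: ler_dist_dist.
Qed.

Lemma H_mul (R : realType) Omega (S : sublinear_expectation R Omega) X Y :
  H S X -> H S Y -> H S (fun w => X w * Y w).
Proof.
apply: (@H_bin _ _ S (fun a b => a * b) 1) => // a b a' b'.
have -> : a * b - a' * b' = a * (b - b') + b' * (a - a') by ring.
apply: le_trans (ler_normD _ _) _; rewrite !normrM.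
have := normr_ge0 a; have := normr_ge0 b; have := normr_ge0 a'; have := normr_ge0 b'.
have := normr_ge0 (a - a'); have := normr_ge0 (b - b'). nra.
Qed.

Lemma H_scale (R : realType) Omega (S : sublinear_expectation R Omega) c X :
  H S X -> H S (fun w => c * X w).
Proof. move=> hX; exact: H_mul (H_cst S c) hX. Qed.

Lemma H_pow (R : realType) Omega (S : sublinear_expectation R Omega) X k :
  H S X -> H S (fun w => X w ^+ k).
Proof.
move=> hX; elim: k => [|k IH].
  by apply: H_ext (H_cst S 1) => w; rewrite expr0.
by apply: H_ext (H_mul hX IH) => w; rewrite exprS.
Qed.

Lemma E_le (R : realType) Omega (S : sublinear_expectation R Omega) (X Y : Omega -> R) :
  H S X -> H S Y -> (forall w, X w <= Y w) -> E S X <= E S Y.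
Proof. exact: E_mono. Qed.

Lemma E_le_cst (R : realType) Omega (S : sublinear_expectation R Omega) (X : Omega -> R) c :
  H S X -> (forall w, X w <= c) -> E S X <= c.
Proof. move=> hX h; rewrite -(E_cst S c); exact: E_mono (H_cst S c) h. Qed.

Lemma E_ge_cst (R : realType) Omega (S : sublinear_expectation R Omega) (X : Omega -> R) c :
  H S X -> (forall w, c <= X w) -> c <= E S X.
Proof. move=> hX h; rewrite -(E_cst S c); exact: E_mono (H_cst S c) hX h. Qed.

Lemma E_subdiff (R : realType) Omega (S : sublinear_expectation R Omega) (X Y : Omega -> R) :
  H S X -> H S Y -> E S X <= E S Y + E S (fun w => X w - Y w).
Proof.
move=> hX hY.
rewrite (@E_ext _ _ S X (fun w => (X w - Y w) + Y w)); last by move=> w; rewrite subrK.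
rewrite addrC; exact: E_subadd (H_sub hX hY) hY.
Qed.

Lemma joinv_l (R : realType) m n (x : 'I_m -> R) (y : 'I_n -> R) i :
  joinv x y (lshift n i) = x i.
Proof. by rewrite /joinv (unsplitK (inl _ i) : split (lshift n i) = inl i). Qed.

Lemma joinv_r (R : realType) m n (x : 'I_m -> R) (y : 'I_n -> R) j :
  joinv x y (rshift m j) = y j.
Proof. by rewrite /joinv (unsplitK (inr _ j) : split (rshift m j) = inr j). Qed.

Lemma normn_joinv (R : realType) m n (x : 'I_m -> R) (y : 'I_n -> R) :
  normn (joinv x y) = normn x + normn y.
Proof.
rewrite /normn big_split_ord /=; congr (_ + _); apply: eq_bigr => i _.
  by rewrite joinv_l. by rewrite joinv_r.
Qed.

Lemma subv_joinv (R : realType) m n (x x' : 'I_m -> R) (y y' : 'I_n -> R) :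
  subv (joinv x y) (joinv x' y') = joinv (subv x x') (subv y y').
Proof.
apply: functional_extensionality => k; rewrite /subv /joinv.
by case: (split k).
Qed.

Lemma normn_subv_joinv (R : realType) m n (x x' : 'I_m -> R) (y y' : 'I_n -> R) :
  normn (subv (joinv x y) (joinv x' y')) = normn (subv x x') + normn (subv y y').
Proof. by rewrite subv_joinv normn_joinv. Qed.

Lemma joinv_eta (R : realType) m n (t : 'I_(m + n) -> R) :
  joinv (fun i => t (lshift n i)) (fun j => t (rshift m j)) = t.
Proof.
apply: functional_extensionality => k; rewrite /joinv.
by case: splitP => j hj; congr t; apply: val_inj; rewrite /= hj.
Qed.

Lemma normn_subv_ge0 (R : realType) n (x : 'I_n -> R) : normn (subv x x) = 0.
Proof. by rewrite /normn big1 // => i _; rewrite /subv subrr normr0. Qed.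

Lemma bLip_lLip (R : realType) n (phi : ('I_n -> R) -> R) : bLip phi -> lLip phi.
Proof. by case=> _ [L hL]; exact: lip_lLip hL. Qed.

Lemma single_le_normn (R : realType) n (z : 'I_n -> R) j : `|z j| <= normn z.
Proof.
have := @sum_inj_le R 1 n (fun _ => j) (fun i => `|z i|).
rewrite big_ord1; apply.
- by move=> [[|a] Ha] [[|b] Hb] //= _; apply: val_inj.
- by move=> i; exact: normr_ge0.
Qed.

Lemma bLip_abs (R : realType) n (phi : ('I_n -> R) -> R) : bLip phi ->
  exists L, 0 <= L /\ forall x y, `|phi x - phi y| <= L * normn (subv x y).
Proof.
case=> _ [L hL]; exists `|L|; split; first exact: normr_ge0.
move=> x y; apply: le_trans (hL x y) _; apply: ler_wpM2r; first exact: normn_ge0.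
exact: ler_norm.
Qed.

Definition attains (R : realType) n (e : R) (psi : ('I_n -> R) -> R) (Th : ('I_n -> R) -> Prop) :=
  (exists t, Th t /\ e = psi t) /\ (forall t, Th t -> psi t <= e).

Lemma maxdist_att (R : realType) Omega (S : sublinear_expectation R Omega) n
  (V : 'I_n -> Omega -> R) Th psi :
  maxdist S V Th -> lLip psi -> attains (E S (fun w => psi (fun i => V i w))) psi Th.
Proof.
move=> hM hp; case: (hM psi hp) => [[t [ht e]] up]; split; first by exists t.
exact: up.
Qed.

Lemma E_joinv_lip (R : realType) Omega (S : sublinear_expectation R Omega) m n
  (phi : ('I_(m + n) -> R) -> R) L (Y : Omega -> 'I_n -> R) :
  0 <= L -> (forall x y, `|phi x - phi y| <= L * normn (subv x y)) ->
  (forall x, H S (fun w => phi (joinv x (Y w)))) ->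
  forall x x', `|E S (fun w => phi (joinv x (Y w))) - E S (fun w => phi (joinv x' (Y w)))|
     <= L * normn (subv x x').
Proof.
move=> L0 hL hH.
have key : forall x x', E S (fun w => phi (joinv x (Y w))) <=
    E S (fun w => phi (joinv x' (Y w))) + L * normn (subv x x').
  move=> x x'; apply: le_trans (E_subdiff (hH x) (hH x')) _.
  rewrite lerD2l; apply: E_le_cst; first exact: H_sub.
  move=> w; apply: le_trans (ler_norm _) _; apply: le_trans (hL _ _) _.
  by rewrite normn_subv_joinv normn_subv_ge0 addr0.
move=> x x'; have h1 := key x x'; have h2 := key x' x.
have e : normn (subv x' x) = normn (subv x x').
  by apply: eq_bigr => i _; rewrite /subv distrC.
rewrite e in h2; rewrite ler_norml; apply/andP; split; lra.
Qed.

Lemma B_thm (R : realType) Omega (S : sublinear_expectation R Omega) d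
  (lo hi : 'I_d -> R) (V : 'I_d -> Omega -> R) :
  (forall i, H S (V i)) -> maxdist S V (box lo hi) -> seq_indep S V.
Proof.
move=> HV hM k hk _ phi hphi.
have [L [L0 hL]] := bLip_abs hphi.
pose f (t : 'I_(k + 1)) : 'I_d :=
  match split t with inl i => widen_ord (ltnW hk) i | inr _ => Ordinal hk end.
have finj : injective f.
  move=> a b; rewrite /f => e.
  rewrite -(splitK a) -(splitK b).
  case: (split a) e => [i|i]; case: (split b) => [j|j] //= e.
  - by congr lshift; apply: val_inj; move/(congr1 val): e.
  - by move/(congr1 val): e => /= ei; move: (ltn_ord i); rewrite ei ltnn.
  - by move/(congr1 val): e => /= ei; move: (ltn_ord j); rewrite -ei ltnn.
  - by congr rshift; case: i => [[|?] ?]; case: j => [[|?] ?] //; apply: val_inj.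
pose psi (v : 'I_d -> R) := phi (fun t => v (f t)).
have eqv : forall v, phi (joinv (fun i => v (widen_ord (ltnW hk) i)) (fun _ : 'I_1 => v (Ordinal hk))) = psi v.
  move=> v; rewrite /psi; congr phi; apply: functional_extensionality => t.
  by rewrite /joinv /f; case: (split t).
have psiL : lLip psi by apply: lLip_inj => //; exact: bLip_lLip.
pose psix (x : 'I_k -> R) (v : 'I_d -> R) := phi (joinv x (fun _ : 'I_1 => v (Ordinal hk))).
have psixL : forall x, lLip (psix x).
  move=> x; apply: (@lip_lLip _ _ _ L) => v v'; apply: le_trans (hL _ _) _.
  rewrite normn_subv_joinv normn_subv_ge0 add0r; apply: ler_wpM2l => //.
  by rewrite normn1; exact: (single_le_normn (subv v v') (Ordinal hk)).
pose g (x : 'I_k -> R) := E S (fun w => psix x (fun i => V i w)).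
have gL : forall x x', `|g x - g x'| <= L * normn (subv x x').
  move=> x x'; apply: (@E_joinv_lip _ _ S k 1 phi L (fun w => fun _ => V (Ordinal hk) w)) => //.
  by move=> y; exact: (H_lLip HV (psixL y)).
pose gr (v : 'I_d -> R) := g (fun i => v (widen_ord (ltnW hk) i)).
have grL : lLip gr.
  apply: (@lLip_inj _ _ _ (widen_ord (ltnW hk)) g); first by move=> a b /(congr1 val) /= e; apply: val_inj.
  exact: lip_lLip gL.
have -> : E S (fun w => phi (joinv (fun i => V (widen_ord (ltnW hk) i) w) (fun _ => V (Ordinal hk) w)))
   = E S (fun w => psi (fun i => V i w)) by apply: E_ext => w; rewrite -eqv.
have [[t [tb et]] tup] := maxdist_att hM psiL.
have [[th [thb eth]] thup] := maxdist_att hM grL.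
rewrite et.
change (psi t = E S (fun w => gr (fun i => V i w))).
apply/eqP; rewrite eq_le; apply/andP; split.
- apply: le_trans (thup t tb); rewrite -eqv.
  have [_ up] := maxdist_att hM (psixL (fun i => t (widen_ord (ltnW hk) i))).
  exact: up.
- rewrite eth -et.
  have [[ta [tab eta]] _] := maxdist_att hM (psixL (fun i => th (widen_ord (ltnW hk) i))).
  rewrite /gr -/(g _) /g eta.
  pose s := fun j => if j == Ordinal hk then ta j else th j.
  have sb : box lo hi s by move=> j; rewrite /s; case: (j == Ordinal hk).
  apply: le_trans (tup s sb); rewrite -eqv /psix.
  have -> : s (Ordinal hk) = ta (Ordinal hk) by rewrite /s eqxx.
  have -> : (fun i => s (widen_ord (ltnW hk) i)) = (fun i => th (widen_ord (ltnW hk) i)).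
    apply: functional_extensionality => i; rewrite /s.
    case: eqP => // /(congr1 val) /= ei; move: (ltn_ord i); rewrite ei ltnn //.
  by [].
Qed.

Lemma perm_maxdist (R : realType) Omega (S : sublinear_expectation R Omega) d
  (lo hi : 'I_d -> R) (V : 'I_d -> Omega -> R) (s : 'S_d) :
  maxdist S V (box lo hi) ->
  maxdist S (fun k => V (s k)) (box (fun k => lo (s k)) (fun k => hi (s k))).
Proof.
move=> hM phi hphi.
have hL : lLip (fun v : 'I_d -> R => phi (fun k => v (s k))).
  by apply: lLip_inj => //; exact: perm_inj.
have [[t [tb et]] up] := maxdist_att hM hL.
split.
  by exists (fun k => t (s k)); split => // k; exact: tb.
move=> u ub.
have -> : u = (fun k => (fun j => u ((s^-1)%g j)) (s k)).
  by apply: functional_extensionality => k /=; rewrite permK.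
apply: (up (fun j => u ((s^-1)%g j))) => j; have := ub ((s^-1)%g j); by rewrite permKV.
Qed.

Definition clamp (R : realType) (a b t : R) := if t < a then a else if b < t then b else t.

Lemma clamp_in (R : realType) (a b t : R) : a <= b -> a <= clamp a b t <= b.
Proof.
move=> ab; rewrite /clamp; case: (ltP t a) => h1; first by rewrite lexx ab.
by case: (ltP b t) => h2; apply/andP; split; lra.
Qed.

Lemma clamp_id (R : realType) (a b t : R) : a <= t <= b -> clamp a b t = t.
Proof.
case/andP=> h1 h2; rewrite /clamp; case: (ltP t a) => h3; first lra.
case: (ltP b t) => h4 //; lra.
Qed.

Lemma abs_le (R : realType) (u v : R) : u <= v -> - u <= v -> `|u| <= v.
Proof. by move=> h1 h2; rewrite ler_norml; apply/andP; split; lra. Qed.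

Lemma abs_facts (R : realType) (u : R) : u <= `|u| /\ - u <= `|u|.
Proof. by split; [exact: ler_norm | rewrite -normrN; exact: ler_norm]. Qed.

Lemma clamp_lip (R : realType) (a b x y : R) : a <= b ->
  `|clamp a b x - clamp a b y| <= `|x - y|.
Proof.
move=> ab; have [f1 f2] := abs_facts (x - y).
rewrite /clamp; case: (ltP x a) => h1; case: (ltP b x) => h2;
  case: (ltP y a) => h3; case: (ltP b y) => h4; apply: abs_le; lra.
Qed.

Lemma clampd_lip (R : realType) (a b x y : R) : a <= b ->
  `|(x - clamp a b x) - (y - clamp a b y)| <= `|x - y|.
Proof.
move=> ab; have [f1 f2] := abs_facts (x - y).
rewrite /clamp; case: (ltP x a) => h1; case: (ltP b x) => h2;
  case: (ltP y a) => h3; case: (ltP b y) => h4; apply: abs_le; lra.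
Qed.

Lemma clamp_bound (R : realType) (a b t : R) : a <= b -> `|clamp a b t| <= `|a| + `|b|.
Proof.
move=> ab; have [f1 f2] := abs_facts a; have [f3 f4] := abs_facts b.
rewrite /clamp; case: (ltP t a) => h1; case: (ltP b t) => h2; apply: abs_le; lra.
Qed.

Lemma young (R : realType) (M a z : R) : 0 < M -> a * z <= M^-1 * a ^+ 2 + M * z ^+ 2.
Proof.
move=> M0; set u := M^-1 * a ^+ 2.
have hu : M * u = a ^+ 2 by rewrite /u mulrA mulfV ?mul1r // gt_eqF.
have h1 := sqr_ge0 (2 * a - M * z); have h2 := sqr_ge0 (M * z).
rewrite !expr2 in h1 h2 hu *. nra.
Qed.

Lemma le_over (R : realType) (x K : R) : (forall M, 0 < M -> x <= M^-1 * K) -> x <= 0.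
Proof.
move=> h; case: (leP x 0) => // hx; exfalso.
have K1 : 0 < `|K| + 1 by have := normr_ge0 K; lra.
have := h ((`|K| + 1) / x) (divr_gt0 K1 hx).
rewrite invf_div => h1.
set t := x / (`|K| + 1) in h1.
have t0 : 0 < t by rewrite /t divr_gt0.
have ht : t * (`|K| + 1) = x by rewrite /t mulfVK // gt_eqF.
have [f1 _] := abs_facts K; nra.
Qed.

Lemma normn_lip (R : realType) n (x y : 'I_n -> R) :
  `|normn x - normn y| <= 1 * normn (subv x y).
Proof.
rewrite mul1r /normn -sumrB; apply: le_trans (ler_norm_sum _ _ _) _.
by apply: ler_sum => i _; exact: ler_dist_dist.
Qed.

Lemma sqdist_lLip (R : realType) (a b : R) : a <= b ->
  lLip (fun y : 'I_1 -> R => (y ord0 - clamp a b (y ord0)) ^+ 2).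
Proof.
move=> ab; exists (1 + 2 * (`|a| + `|b|)), 1%N; split.
  by have := normr_ge0 a; have := normr_ge0 b; lra.
move=> x y; rewrite !normn1 !expr1 /subv.
set x0 := x ord0; set y0 := y ord0.
set gx := x0 - clamp a b x0; set gy := y0 - clamp a b y0.
have P1 : `|gx - gy| <= `|x0 - y0| by exact: clampd_lip.
have Q1 : `|gx + gy| <= `|x0| + `|y0| + 2 * (`|a| + `|b|).
  apply: le_trans (ler_normD _ _) _.
  have c1 := clamp_bound x0 ab; have c2 := clamp_bound y0 ab.
  have e1 : `|gx| <= `|x0| + (`|a| + `|b|) by apply: le_trans (ler_normB _ _) _; lra.
  have e2 : `|gy| <= `|y0| + (`|a| + `|b|) by apply: le_trans (ler_normB _ _) _; lra.
  lra.
rewrite subr_sqr normrM.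
have := normr_ge0 (gx - gy); have := normr_ge0 (gx + gy); have := normr_ge0 x0;
have := normr_ge0 y0; have := normr_ge0 a; have := normr_ge0 b;
have := normr_ge0 (x0 - y0).
set P := `|gx - gy|; set Q := `|gx + gy|; set D := `|x0 - y0|.
set X := `|x0|; set Y := `|y0|; set A := `|a|; set B := `|b|.
move=> h0 h1 h2 h3 h4 h5 h6.
have s1 : P * Q <= D * Q by apply: ler_wpM2r.
have s2 : D * Q <= D * (X + Y + 2 * (A + B)) by apply: ler_wpM2l.
have s3 : X + Y + 2 * (A + B) <= (1 + 2 * (A + B)) * (1 + X + Y) by nra.
have s4 : D * (X + Y + 2 * (A + B)) <= D * ((1 + 2 * (A + B)) * (1 + X + Y)).
  by apply: ler_wpM2l.
apply: le_trans s1 _; apply: le_trans s2 _; apply: le_trans s4 _.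
by rewrite mulrC.
Qed.

Lemma E_sum (R : realType) Omega (S : sublinear_expectation R Omega) n
  (F : 'I_n -> Omega -> R) : (forall i, H S (F i)) ->
  H S (fun w => \sum_(i < n) F i w) /\ E S (fun w => \sum_(i < n) F i w) <= \sum_(i < n) E S (F i).
Proof.
elim: n F => [|n IH] F hF.
  have e : forall w, \sum_(i < 0) F i w = 0 by move=> w; rewrite big_ord0.
  rewrite big_ord0 (E_ext S e) E_cst; split => //; exact: H_ext (H_cst S 0).
have [h1 h2] := IH (fun i => F (widen_ord (leqnSn n) i)) (fun i => hF _).
have e : forall w, \sum_(i < n.+1) F i w =
    \sum_(i < n) F (widen_ord (leqnSn n) i) w + F ord_max w.
  by move=> w; rewrite big_ord_recr.
split; first exact: H_ext (H_add h1 (hF ord_max)).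
rewrite (E_ext S e) big_ord_recr /=; apply: le_trans (E_subadd h1 (hF ord_max)) _.
by rewrite lerD2r.
Qed.

Lemma trunc (R : realType) Omega (S : sublinear_expectation R Omega) d
  (lo hi : 'I_d -> R) (V : 'I_d -> Omega -> R) :
  (forall i, lo i <= hi i) -> (forall i, H S (V i)) ->
  (forall i, maxdist S (fun _ : 'I_1 => V i)
                       (fun theta : 'I_1 -> R => lo i <= theta ord0 <= hi i)) ->
  forall phi, lLip phi ->
  E S (fun w => phi (fun i => V i w)) =
  E S (fun w => phi (fun i => clamp (lo i) (hi i) (V i w))).
Proof.
move=> lohi HV hm phi hphi.
have HpV : forall i, H S (fun w => clamp (lo i) (hi i) (V i w)).
  move=> i; apply: (@H_un _ _ S (clamp (lo i) (hi i)) 1) (HV i) => a b.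
  rewrite mul1r; exact: clamp_lip.
have H1 := H_lLip HV hphi.
have H2 := @H_lLip _ _ S d (fun i w => clamp (lo i) (hi i) (V i w)) phi HpV hphi.
have Hf := H_absub H1 H2.
case: hphi => C [k [C0 hC]].
have HN1 := H_lLip HV (lip_lLip (@normn_lip R d)).
have HN2 := H_lLip HpV (lip_lLip (@normn_lip R d)).
pose a w := C * (1 + normn (fun i => V i w) ^+ k
                   + normn (fun i => clamp (lo i) (hi i) (V i w)) ^+ k).
have Ha : H S a := H_scale C (H_add (H_add (H_cst S 1) (H_pow k HN1)) (H_pow k HN2)).
have Hab : forall i, H S (fun w => a w * `|V i w - clamp (lo i) (hi i) (V i w)|).
  by move=> i; apply: H_mul Ha (H_absub (HV i) (HpV i)).
have Eab : forall i, E S (fun w => a w * `|V i w - clamp (lo i) (hi i) (V i w)|) <= 0.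
  move=> i.
  have Hb2 := H_pow 2 (H_sub (HV i) (HpV i)).
  have Eb2 : E S (fun w => (V i w - clamp (lo i) (hi i) (V i w)) ^+ 2) = 0.
    have [[th [thb eth]] _] := maxdist_att (hm i) (sqdist_lLip (lohi i)).
    by rewrite eth /= clamp_id // subrr expr2 mulr0.
  apply: (@le_over _ _ (E S (fun w => a w ^+ 2))) => M M0.
  have Hs1 := H_scale M^-1 (H_pow 2 Ha).
  have Hs2 := H_scale M Hb2.
  apply: le_trans (E_le (Hab i) (H_add Hs1 Hs2) _) _.
    move=> w /=; have := young (a w) `|V i w - clamp (lo i) (hi i) (V i w)| M0.
    by rewrite -normrX (ger0_norm (sqr_ge0 (V i w - clamp (lo i) (hi i) (V i w)))).
  apply: le_trans (E_subadd Hs1 Hs2) _.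
  have iM : 0 <= M^-1 by rewrite invr_ge0 ltW.
  rewrite (E_poshom iM (H_pow 2 Ha)) (E_poshom (ltW M0) Hb2) Eb2 mulr0 addr0.
  exact: lexx.
have [HS ES] := @E_sum _ _ S d (fun i w => a w * `|V i w - clamp (lo i) (hi i) (V i w)|) Hab.
have Ef : E S (fun w => `|phi (fun i => V i w) - phi (fun i => clamp (lo i) (hi i) (V i w))|) <= 0.
  apply: le_trans (E_le Hf HS _) _.
    move=> w; apply: le_trans (hC _ _) _; rewrite -mulr_sumr; exact: lexx.
  apply: le_trans ES _; apply: sumr_le0 => i _; exact: Eab.
have d1 := E_subdiff H1 H2; have d2 := E_subdiff H2 H1.
have f1 := E_le (H_sub H1 H2) Hf (fun w => ler_norm _).
have f2 : E S (fun w => phi (fun i => clamp (lo i) (hi i) (V i w)) - phi (fun i => V i w))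
   <= E S (fun w => `|phi (fun i => V i w) - phi (fun i => clamp (lo i) (hi i) (V i w))|).
  by apply: E_le (H_sub H2 H1) Hf _ => w; rewrite distrC; exact: ler_norm.
apply/eqP; rewrite eq_le; apply/andP; split; lra.
Qed.

Lemma normn_subv_le (R : realType) n (a b : 'I_n -> R) :
  normn (subv a b) <= normn a + normn b.
Proof.
rewrite /normn -big_split /=; apply: ler_sum => i _; exact: ler_normB.
Qed.

Lemma clamp_bLip (R : realType) d (lo hi : 'I_d -> R) (phi : ('I_d -> R) -> R) :
  (forall i, lo i <= hi i) -> lLip phi ->
  bLip (fun v => phi (fun i => clamp (lo i) (hi i) (v i))).
Proof.
move=> lohi [C [k [C0 hC]]].
pose pi (v : 'I_d -> R) := fun i => clamp (lo i) (hi i) (v i).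
pose B0 := \sum_(i < d) (`|lo i| + `|hi i|).
have nb : forall v, normn (pi v) <= B0.
  by move=> v; apply: ler_sum => i _; exact: clamp_bound.
have nd : forall x y, normn (subv (pi x) (pi y)) <= normn (subv x y).
  by move=> x y; apply: ler_sum => i _; exact: clamp_lip.
have B00 : 0 <= B0 by apply: le_trans (nb (fun _ => 0)); exact: normn_ge0.
pose K := C * (1 + B0 ^+ k + B0 ^+ k).
have K0 : 0 <= K by apply: mulr_ge0 => //; apply: addr_ge0; first apply: addr_ge0 => //;
  exact: exprn_ge0.
have core : forall x y, `|phi (pi x) - phi (pi y)| <= K * normn (subv (pi x) (pi y)).
  move=> x y; apply: le_trans (hC _ _) _; apply: ler_wpM2r; first exact: normn_ge0.
  have pw : forall v, normn (pi v) ^+ k <= B0 ^+ k.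
    move=> v; apply: lerXn2r; last exact: nb.
    + by rewrite nnegrE; exact: normn_ge0.
    + by rewrite nnegrE.
  apply: ler_wpM2l => //; have := pw x; have := pw y; rewrite /pi; lra.
split.
  exists (`|phi (pi (fun _ => 0))| + K * (B0 + B0)) => x.
  have h1 := core x (fun _ => 0).
  have h2 : K * normn (subv (pi x) (pi (fun _ => 0))) <= K * (B0 + B0).
    apply: ler_wpM2l => //; apply: le_trans (normn_subv_le _ _) _.
    by apply: lerD; apply: nb.
  have h3 := ler_normD (phi (pi x) - phi (pi (fun _ => 0))) (phi (pi (fun _ => 0))).
  rewrite subrK in h3.
  change (`|phi (pi x)| <= `|phi (pi (fun=> 0))| + K * (B0 + B0)); lra.
exists K => x y; apply: le_trans (core x y) _; apply: ler_wpM2l => //; exact: nd.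
Qed.

Lemma indep0 (R : realType) Omega (S : sublinear_expectation R Omega) n
  (X : 'I_0 -> Omega -> R) (Y : 'I_n -> Omega -> R) : indep S X Y.
Proof.
move=> phi _.
have e : forall w, (fun i => X i w) = (fun _ => 0).
  by move=> w; apply: functional_extensionality => -[].
rewrite (E_ext S (fun w => congr1 (fun z => phi (joinv z (fun j => Y j w))) (e w))).
rewrite (E_ext S (fun w => congr1 (fun z => E S (fun w' => phi (joinv z (fun j => Y j w')))) (e w))).
by rewrite E_cst.
Qed.

Definition Pm (R : realType) Omega (S : sublinear_expectation R Omega) d
  (lo hi : 'I_d -> R) (V : 'I_d -> Omega -> R) m (hm : (m <= d)%N) :=
  forall psi : ('I_m -> R) -> R, bLip psi ->
    attains (E S (fun w => psi (fun i => V (widen_ord hm i) w))) psi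
      (box (fun i => lo (widen_ord hm i)) (fun i => hi (widen_ord hm i))).

Lemma step (R : realType) Omega (S : sublinear_expectation R Omega) d
  (lo hi : 'I_d -> R) (V : 'I_d -> Omega -> R) m (hk : (m < d)%N) (hk' : (m + 1 <= d)%N) :
  (forall i, H S (V i)) ->
  indep S (fun i : 'I_m => V (widen_ord (ltnW hk) i)) (fun _ : 'I_1 => V (Ordinal hk)) ->
  maxdist S (fun _ : 'I_1 => V (Ordinal hk))
     (fun theta : 'I_1 -> R => lo (Ordinal hk) <= theta ord0 <= hi (Ordinal hk)) ->
  Pm S lo hi V (ltnW hk) -> Pm S lo hi V hk'.
Proof.
move=> HV I Mg IH psi hpsi.
have [L [L0 hL]] := bLip_abs hpsi.
have [[Mb hMb] _] := hpsi.
have eV : forall w, (fun i => V (widen_ord hk' i) w) =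
    joinv (fun i : 'I_m => V (widen_ord (ltnW hk) i) w) (fun _ : 'I_1 => V (Ordinal hk) w).
  move=> w; apply: functional_extensionality => t; rewrite /joinv.
  case: splitP => j hj; congr V; apply: val_inj => /=; rewrite hj //.
  by rewrite (ord1 j) addn0.
rewrite (E_ext S (fun w => congr1 psi (eV w))) (I psi hpsi).
pose psix (x : 'I_m -> R) (y : 'I_1 -> R) := psi (joinv x y).
have psixL : forall x, lLip (psix x).
  move=> x; apply: (@lip_lLip _ _ _ L) => y y'; apply: le_trans (hL _ _) _.
  by rewrite normn_subv_joinv normn_subv_ge0 add0r.
have Hx : forall x, H S (fun w => psix x (fun _ => V (Ordinal hk) w)).
  by move=> x; exact: (@H_lLip _ _ S 1 (fun _ => V (Ordinal hk)) (psix x) (fun _ => HV _) (psixL x)).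
pose g (x : 'I_m -> R) := E S (fun w => psix x (fun _ => V (Ordinal hk) w)).
have gb : bLip g.
  split.
    exists Mb => x; rewrite ler_norml; apply/andP; split.
      apply: E_ge_cst (Hx x) _ => w; have := hMb (joinv x (fun _ => V (Ordinal hk) w)).
      by rewrite ler_norml => /andP[].
    apply: E_le_cst (Hx x) _ => w; have := hMb (joinv x (fun _ => V (Ordinal hk) w)).
    by rewrite ler_norml => /andP[].
  exists L; exact: (@E_joinv_lip _ _ S m 1 psi L (fun w => fun _ => V (Ordinal hk) w)).
have [[th [thb eth]] thup] := IH g gb.
have [[y [yb ey]] _] := maxdist_att Mg (psixL th).
have [_ yup] := maxdist_att Mg (psixL th).
split.
  exists (joinv th y); split.
    move=> t; rewrite /joinv; case: splitP => j hj.
      have -> : widen_ord hk' t = widen_ord (ltnW hk) j by apply: val_inj; rewrite /= hj.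
      exact: thb.
    have -> : widen_ord hk' t = Ordinal hk by apply: val_inj; rewrite /= hj (ord1 j) addn0.
    by rewrite (ord1 j).
  change (E S (fun w => g (fun i => V (widen_ord (ltnW hk) i) w)) = psix th y).
  by rewrite eth /g ey.
move=> t tb; rewrite -(joinv_eta t).
set x := fun i => t (lshift 1 i); set z := fun j => t (rshift m j).
have xb : box (fun i => lo (widen_ord (ltnW hk) i)) (fun i => hi (widen_ord (ltnW hk) i)) x.
  move=> i; rewrite /x; have := tb (lshift 1 i).
  by have -> : widen_ord hk' (lshift 1 i) = widen_ord (ltnW hk) i by apply: val_inj.
have zb : lo (Ordinal hk) <= z ord0 <= hi (Ordinal hk).
  rewrite /z; have := tb (rshift m ord0).
  by have -> : widen_ord hk' (rshift m ord0) = Ordinal hk by apply: val_inj; rewrite /= addn0.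
have [_ zup] := maxdist_att Mg (psixL x).
apply: le_trans (thup x xb).
exact: (zup z zb).
Qed.

Lemma A_all (R : realType) Omega (S : sublinear_expectation R Omega) d
  (lo hi : 'I_d -> R) (V : 'I_d -> Omega -> R) :
  (forall i, H S (V i)) ->
  (forall i, maxdist S (fun _ : 'I_1 => V i)
                       (fun theta : 'I_1 -> R => lo i <= theta ord0 <= hi i)) ->
  seq_indep S V -> forall m (hm : (m <= d)%N), Pm S lo hi V hm.
Proof.
move=> HV hm0 hseq; elim=> [|m IH].
  move=> hm psi _.
  have e : forall (t : 'I_0 -> R), t = (fun _ => 0).
    by move=> t; apply: functional_extensionality => -[].
  rewrite (E_ext S (fun w => congr1 psi (e (fun i => V (widen_ord hm i) w)))) E_cst.
  split; first by exists (fun _ => 0); split => // -[].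
  by move=> t _; rewrite (e t).
rewrite -addn1 => hk'.
have hk : (m < d)%N by rewrite -addn1.
apply: (step (hk := hk)) => //.
by case: m {IH hk'} hk => [|m'] hk; [exact: indep0 | exact: hseq].
Qed.

Lemma A_thm (R : realType) Omega (S : sublinear_expectation R Omega) d
  (lo hi : 'I_d -> R) (V : 'I_d -> Omega -> R) :
  (forall i, lo i <= hi i) ->
  (forall i, H S (V i)) ->
  (forall i, maxdist S (fun _ : 'I_1 => V i)
                       (fun theta : 'I_1 -> R => lo i <= theta ord0 <= hi i)) ->
  seq_indep S V -> maxdist S V (box lo hi).
Proof.
move=> lohi HV hm hseq phi hphi.
have Pd := A_all HV hm hseq (leqnn d).
pose psi (v : 'I_d -> R) := phi (fun i => clamp (lo i) (hi i) (v i)).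
have hpsi : bLip psi by exact: clamp_bLip.
have [[t [tb et]] up] := Pd psi hpsi.
have ew : forall i : 'I_d, widen_ord (leqnn d) i = i by move=> i; apply: val_inj.
have e1 : (fun w => psi (fun i => V (widen_ord (leqnn d) i) w)) = (fun w => psi (fun i => V i w)).
  apply: functional_extensionality => w; congr psi.
  by apply: functional_extensionality => i; rewrite ew.
rewrite e1 in et up.
have etr := trunc lohi HV hm hphi.
split.
  exists (fun i => clamp (lo i) (hi i) (t i)); split.
    by move=> i; exact: clamp_in.
  by rewrite etr et.
move=> u ub; rewrite etr.
have -> : u = (fun i => clamp (lo i) (hi i) (u i)).
  by apply: functional_extensionality => i; rewrite clamp_id.
apply: (up u) => i; rewrite ew; exact: ub.
Qed.

Theorem mainTheorem6 (R : realType) (Omega : Type)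
  (S : sublinear_expectation R Omega) (d : nat)
  (lo hi : 'I_d -> R) (V : 'I_d -> Omega -> R) :
  (forall i, lo i <= hi i) ->
  (forall i, H S (V i)) ->
  (forall i, maxdist S (fun _ : 'I_1 => V i)
                       (fun theta : 'I_1 -> R => lo i <= theta ord0 <= hi i)) ->
  [<-> seq_indep S V;
       forall s : 'S_d, seq_indep S (fun k => V (s k));
       maxdist S V (box lo hi)].
Proof.
move=> lohi HV hm.
tfae.
- move=> h1 s; apply: (@B_thm _ _ S d (fun k => lo (s k)) (fun k => hi (s k))).
    by move=> i; exact: HV.
  by apply: perm_maxdist; exact: A_thm.
- move=> h2; apply: A_thm => //.
  have := h2 1%g.
  have -> : (fun k => V ((1%g : 'S_d) k)) = V.
    by apply: functional_extensionality => k; rewrite perm1.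
  by [].
- exact: B_thm.
Qed.
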